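(* Let $\mathcal{M}$ be a separable metric space, $f:\mathcal{M}\to\mathcal{M}$ continuous, and $\mathcal{X}\subseteq\mathcal{M}$ forward invariant under $f$. For any $\xi\in\mathcal{X}$, if the trajectory through $\xi$ is forward precompact in $\mathcal{X}$, then $\omega_{\mathcal{X}}(\xi)$ is nonempty. Moreover, if $\mathcal{M}=\mathbb{R}^n$, $f(x)=Ax$ on $\mathcal{X}$ for some $A\in\mathbb{R}^{n\times n}$, and $\mathcal{X}$ is closed in $\mathbb{R}^n$, then conversely, $\omega_{\mathcal{X}}(\xi)\neq\emptyset$ implies that the trajectory through $\xi$ is forward precompact in $\mathcal{X}$.
   Context: The forward orbit of $\xi$ is $\{f^k(\xi)\mid k\in\mathbb{N}\}$; the trajectory through $\xi$ is forward precompact in $\mathcal{X}$ if the closure of its forward orbit in $\mathcal{X}$ is compact. $\omega_{\mathcal{X}}(\xi)$ is the set of $x\in\mathcal{X}$ such that $f^{k_j}(\xi)\to x$ for some sequence of indices $k_j\to\infty$. *)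

(* Defs.v *)
From HB Require Import structures.
From mathcomp Require Import all_boot all_order all_algebra.
From mathcomp Require Import all_classical all_reals all_analysis.
Set Implicit Arguments. Unset Strict Implicit. Unset Printing Implicit Defensive.
Import Order.TTheory GRing.Theory Num.Theory.
Import numFieldNormedType.Exports.
Local Open Scope classical_set_scope.
Local Open Scope ring_scope.

Definition separable_space (T : topologicalType) : Prop :=
  exists D : set T, countable D /\ closure D = setT.

Definition forward_invariant (T : Type) (f : T -> T) (X : set T) : Prop :=
  f @` X `<=` X.

Definition forward_orbit (T : Type) (f : T -> T) (xi : T) : set T :=
  [set iter k f xi | k in setT].

Definition closure_in (T : topologicalType) (X A : set T) : set T :=
  X `&` closure A.

(* the trajectory through xi is forward precompact in X: the closure in X of
   its forward orbit is compact (compactness of a subset of X in the subspace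
   topology coincides with compactness in the ambient space). *)
Definition forward_precompact_in (T : topologicalType) (X : set T)
  (f : T -> T) (xi : T) : Prop :=
  compact (closure_in X (forward_orbit f xi)).

Definition omega_limit_in (T : topologicalType) (X : set T)
  (f : T -> T) (xi : T) : set T :=
  [set x | X x /\ exists k : nat -> nat,
      k @ \oo --> \oo /\ (fun j => iter (k j) f xi) @ \oo --> x].

(* Main.v *)
Require Import Defs.
From HB Require Import structures.
From mathcomp Require Import all_boot all_order all_algebra.
From mathcomp Require Import all_classical all_reals all_analysis.
From mathcomp Require Import complex ring zify.
Import Order.TTheory GRing.Theory Num.Theory.
Import numFieldNormedType.Exports.
Local Open Scope classical_set_scope.
Local Open Scope ring_scope.

Module L7.
Set Implicit Arguments. Unset Strict Implicit. Unset Printing Implicit Defensive.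

Section Core.
Variable C : numClosedFieldType.
Hypothesis arch : forall x : C, 0 <= x -> exists N : nat, x < N%:R.
Variable n : nat.
Implicit Types (A M : 'M[C]_n.+1) (v w : 'cV[C]_n.+1).

Definition l7bnd (B : C) v := forall i, `|v i 0| <= B.
Definition l7FB A v := exists B, forall N, exists2 k, (N <= k)%N & l7bnd B (A ^+ k *m v).
Definition l7AB A v := exists B, forall k, l7bnd B (A ^+ k *m v).

Lemma l7_bnd_ge0 B v : l7bnd B v -> 0 <= B.
Proof. by move=> H; apply: le_trans (H ord0). Qed.

Definition l7msum M := \sum_i \sum_j `|M i j|.

Lemma l7_bnd_mul M v B : l7bnd B v -> l7bnd (l7msum M * B) (M *m v).
Proof.
move=> Hv i; have B0 := l7_bnd_ge0 Hv.
rewrite mxE; apply: le_trans (ler_norm_sum _ _ _) _.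
apply: (@le_trans _ _ (\sum_j `|M i j| * B)).
  by apply: ler_sum => j _; rewrite normrM ler_wpM2l.
rewrite -mulr_suml ler_wpM2r // /l7msum [X in _ <= X](bigD1 i) //= lerDl.
by apply: sumr_ge0 => k _; apply: sumr_ge0.
Qed.

Lemma l7_FB_mul A M v : M * A = A * M -> l7FB A v -> l7FB A (M *m v).
Proof.
move=> cMA [B HB]; exists (l7msum M * B) => N.
have [k Nk Hk] := HB N; exists k => //.
have cMAk : GRing.comm M (A ^+ k) by apply: commrX.
by rewrite mulmxA mulmxE -cMAk -mulmxE -mulmxA; apply: l7_bnd_mul.
Qed.

Lemma l7_AB_add A v w : l7AB A v -> l7AB A w -> l7AB A (v + w).
Proof.
move=> [B1 H1] [B2 H2]; exists (B1 + B2) => k i.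
rewrite mulmxDr mxE; apply: le_trans (ler_normD _ _) _; exact: lerD (H1 k i) (H2 k i).
Qed.

Lemma l7_AB0 A : l7AB A 0.
Proof. by exists 0 => k i; rewrite mulmx0 mxE normr0. Qed.

Lemma l7_vsum_bnd v : l7bnd (\sum_i `|v i 0|) v.
Proof.
move=> i; rewrite (bigD1 i) //= lerDl; exact: sumr_ge0.
Qed.

Lemma l7_nz_entry v : v != 0 -> exists i, v i 0 != 0.
Proof.
move=> vn0; apply/existsP; apply: contraR vn0 => /existsPn H.
apply/eqP/matrixP => i j; rewrite (ord1 j) mxE; exact/eqP/negbNE/H.
Qed.

Lemma l7_FB_lb A v i (c D : C) : 0 < c ->
  (forall k, k%:R * c - D <= `|(A ^+ k *m v) i 0|) -> l7FB A v -> False.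
Proof.
move=> c0 Hlb [B HB].
have [N HN] := arch (normr_ge0 ((B + D) / c)).
have [k Nk Hk] := HB N.
have h1 : k%:R * c - D <= B := le_trans (Hlb k) (Hk i).
have h2 : k%:R <= (B + D) / c by rewrite ler_pdivlMr // -lerBlDr.
have hr : (B + D) / c \is Num.real.
  by rewrite -(subrK (k%:R) ((B + D) / c)) rpredD ?ger0_real ?subr_ge0 // realn.
have : (N%:R : C) < N%:R.
  apply: le_lt_trans HN; apply: le_trans (real_ler_norm hr).
  by apply: le_trans h2; rewrite ler_nat.
by rewrite ltxx.
Qed.

Lemma l7_bernoulli (x : C) (k : nat) : 0 <= x -> k%:R * x <= (1 + x) ^+ k.
Proof.
move=> x0; suff : 1 + k%:R * x <= (1 + x) ^+ k.
  by apply: le_trans; rewrite lerDr.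
elim: k => [|k IH]; first by rewrite mul0r addr0 expr0.
rewrite exprS; apply: le_trans (ler_wpM2l _ IH); last by rewrite addr_ge0.
rewrite mulrDr mulr1 mulrDl mul1r -natr1 mulrDl mul1r addrA.
by rewrite -[X in X <= _]addrA [k%:R * x + x]addrC !addrA lerDl mulr_ge0 // mulr_ge0.
Qed.

Lemma l7_eig_pow A (l : C) (u : 'cV[C]_n.+1) : A *m u = l *: u -> forall k, A ^+ k *m u = l ^+ k *: u.
Proof.
move=> Au; elim=> [|k IH]; first by rewrite !expr0 mul1mx scale1r.
by rewrite exprSr -mulmxE -mulmxA Au -scalemxAr IH scalerA -exprS.
Qed.

Lemma l7_block A (l : C) m : forall w, (A - l%:M) ^+ m *m w = 0 -> l7FB A w ->
  l7AB A w /\ (w = 0 \/ `|l| < 1 \/ (A *m w = l *: w /\ `|l| <= 1)).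
Proof.
elim: m => [|m IH] w.
  rewrite expr0 mul1mx => -> _; split; [exact: l7_AB0 | by left].
move=> Hm FBw.
set N := A - l%:M.
set u := N *m w.
have cNA : N * A = A * N.
  by rewrite /N mulrBl mulrBr -!mulmxE scalar_mxC.
have FBu : l7FB A u := l7_FB_mul cNA FBw.
have Hu : N ^+ m *m u = 0 by rewrite /u mulmxA mulmxE -exprSr.
have [ABu Hdisj] := IH u Hu FBu.
have Aw : A *m w = l *: w + u.
  by rewrite /u /N mulmxBl mul_scalar_mx addrC subrK.
have zS k : A ^+ k.+1 *m w = l *: (A ^+ k *m w) + A ^+ k *m u.
  by rewrite exprSr -mulmxE -mulmxA Aw mulmxDr -scalemxAr.
have w_bnd := l7_vsum_bnd w.
have Bw0 : 0 <= \sum_i `|w i 0| := l7_bnd_ge0 w_bnd.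
have eig : A *m w = l *: w ->
    l7AB A w /\ (w = 0 \/ `|l| < 1 \/ (A *m w = l *: w /\ `|l| <= 1)).
  move=> Aw'; have zk := l7_eig_pow Aw'.
  have [w0|wn0] := eqVneq w 0; first by split; [rewrite w0; exact: l7_AB0| left].
  have [l1e|l1e] := boolP (`|l| <= 1).
    split; last by right; right.
    exists (\sum_i `|w i 0|) => k i; rewrite zk mxE normrM normrX.
    apply: le_trans (w_bnd i); rewrite ler_piMl // exprn_ile1 //.
  exfalso; have [i wi] := l7_nz_entry wn0.
  have lgt1 : 1 < `|l| by rewrite real_ltNge ?l1e // realE normr_ge0 orbT.
  apply: (@l7_FB_lb A w i ((`|l| - 1) * `|w i 0|) 0) FBw.
    by rewrite mulr_gt0 ?subr_gt0 ?normr_gt0.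
  move=> k; rewrite subr0 zk mxE normrM normrX mulrA ler_wpM2r //.
  by have := @l7_bernoulli (`|l| - 1) k; rewrite [1 + _]addrC subrK; apply; rewrite subr_ge0 ltW.
case/orP: (orbN (`|l| < 1)) => l1.
  split; last by right; left.
  have [Bu HBu] := ABu; have Bu0 : 0 <= Bu := l7_bnd_ge0 (HBu 0%N).
  have d0 : 0 < 1 - `|l| by rewrite subr_gt0.
  set M := \sum_i `|w i 0| + Bu / (1 - `|l|).
  have EM : M = `|l| * M + ((1 - `|l|) * (\sum_i `|w i 0|) + Bu).
    rewrite /M; move: d0; set d := 1 - `|l|; set s := \sum_i _ => d0.
    have -> : `|l| = 1 - d by rewrite /d subKr.
    by field; rewrite gt_eqF.
  exists M => k; elim: k => [|k IHk] i.
    rewrite expr0 mul1mx; apply: le_trans (w_bnd i) _.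
    by rewrite lerDl divr_ge0 // ltW.
  rewrite zS mxE [X in `|X + _|]mxE.
  apply: le_trans (ler_normD _ _) _; rewrite normrM.
  apply: le_trans (lerD (ler_wpM2l (normr_ge0 l) (IHk i)) (HBu k i)) _.
  by rewrite [X in _ <= X]EM lerD2l lerDr mulr_ge0 // ltW.
have l1' : 1 <= `|l|.
  by rewrite real_leNgt ?l1 // realE normr_ge0 orbT.
case: Hdisj => [u0 | [lt1 | [Au le1]]].
- by apply: eig; rewrite Aw u0 addr0.
- by rewrite lt1 in l1.
have le1' : `|l| = 1 by apply/le_anti; rewrite le1 l1'.
have [u0|un0] := eqVneq u 0; first by apply: eig; rewrite Aw u0 addr0.
exfalso; clearbody u; have [i ui] := l7_nz_entry un0.
have uk := l7_eig_pow Au.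
have zk k : l *: (A ^+ k *m w) = l ^+ k.+1 *: w + (k%:R * l ^+ k) *: u.
  elim: k => [|k IHk]; first by rewrite expr0 mul1mx expr1 mul0r scale0r addr0.
  rewrite zS scalerDr IHk uk scalerDr -addrA scalerA -exprS; congr (_ + _).
  by rewrite !scalerA -scalerDl mulrCA -exprS -[in RHS]natr1 mulrDl mul1r.
apply: (@l7_FB_lb A w i (`|u i 0|) (`|w i 0|)) FBw; first by rewrite normr_gt0.
move=> k; rewrite lerBlDr.
have -> : `|(A ^+ k *m w) i 0| = `|(l *: (A ^+ k *m w)) i 0|.
  by rewrite [in RHS]mxE normrM le1' mul1r.
rewrite zk mxE [X in `|_ + X|]mxE [X in `|X + _|]mxE.
have -> : k%:R * `|u i 0| = `|(k%:R * l ^+ k) * u i 0|.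
  by rewrite !normrM normrX le1' expr1n mulr1 normr_nat.
have -> : `|w i 0| = `|l ^+ k.+1 * w i 0| by rewrite normrM normrX le1' expr1n mul1r.
rewrite -[X in `|X| <= _](addKr (l ^+ k.+1 * w i 0)).
by apply: le_trans (ler_normD _ _) _; rewrite normrN addrC.
Qed.

Lemma l7_hmx_comm A (p : {poly C}) : horner_mx A p * A = A * horner_mx A p.
Proof.
have h : horner_mx A p * horner_mx A 'X = horner_mx A 'X * horner_mx A p.
  by rewrite -!rmorphM mulrC.
by move: h; rewrite horner_mx_X.
Qed.

Lemma l7_main_C A : forall s (p : {poly C}) v, (size p <= s)%N -> p != 0 ->
  horner_mx A p *m v = 0 -> l7FB A v -> l7AB A v.
Proof.
elim=> [|s IH] p v.
  by rewrite leqn0 size_poly_eq0 => ->.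
move=> sp pn0 Hp FBv.
have [sp1 | p1] := eqVneq (size p) 1%N.
  have [c c0 pc] := size_poly1P _ (introT eqP sp1).
  move: Hp; rewrite pc horner_mx_C mul_scalar_mx => /eqP.
  by rewrite scaler_eq0 (negbTE c0) /= => /eqP ->; exact: l7_AB0.
have /closed_rootP [l rl] := p1.
case: (multiplicity_XsubC p l) => m [q]; rewrite pn0 /= => qn Ep.
have qn0 : q != 0 by apply: contraNneq pn0 => q0; rewrite Ep q0 mul0r.
have m0 : (0 < m)%N.
  by case: m Ep => [|m] //; rewrite expr0 mulr1 => Ep; rewrite -Ep rl in qn.
set E := ('X - l%:P) ^+ m in Ep.
have En0 : E != 0 by rewrite expf_neq0 // polyXsubC_eq0.
have sE : size E = m.+1 by rewrite size_exp_XsubC.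
have sp' : size p = (size q + size E).-1 by rewrite Ep size_mul.
have hE : horner_mx A E = (A - l%:M) ^+ m.
  by rewrite rmorphXn rmorphB /= horner_mx_X horner_mx_C.
have [sq1 | q1] := eqVneq (size q) 1%N.
  have [c c0 qc] := size_poly1P _ (introT eqP sq1).
  move: Hp; rewrite Ep qc rmorphM /= horner_mx_C hE -mulmxE -mulmxA mul_scalar_mx.
  move=> /eqP; rewrite scaler_eq0 (negbTE c0) /= => /eqP H.
  by case: (l7_block H FBv).
have cq : coprimep q E by apply: coprimep_expr; rewrite coprimep_XsubC.
have /Bezout_eq1_coprimepP [[a b] /= Hab] := cq.
have kill r t : horner_mx A r *m (horner_mx A t *m v) = horner_mx A (r * t) *m v.
  by rewrite mulmxA mulmxE rmorphM.
have sq : (2 <= size q)%N.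
  by move: q1; rewrite neq_ltn ltnS leqn0 size_poly_eq0 (negbTE qn0).
have Ev : v = horner_mx A (a * q) *m v + horner_mx A (b * E) *m v.
  by rewrite -mulmxDl -rmorphD Hab rmorph1 mul1mx.
rewrite Ev; apply: l7_AB_add.
- apply: (IH E) => //; first by rewrite -ltnS; apply: leq_trans sp; rewrite sp' -subn1; move: sq; move: (size q) (size E) => x y; lia.
    rewrite kill (_ : E * (a * q) = a * p); last by rewrite Ep; ring.
    by rewrite -kill Hp mulmx0.
  by apply: l7_FB_mul => //; exact: l7_hmx_comm.
- apply: (IH q) => //; first by rewrite -ltnS; apply: leq_trans sp; rewrite sp' -subn1 sE; clear -m0; move: m0; move: (size q) m => x y; lia.
    rewrite kill (_ : q * (b * E) = b * p); last by rewrite Ep; ring.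
    by rewrite -kill Hp mulmx0.
  by apply: l7_FB_mul => //; exact: l7_hmx_comm.
Qed.

End Core.

Definition Rc (R : realType) : Type := R.
HB.instance Definition _ (R : realType) := Num.RealField.on (Rc R).

Lemma realType_rca (R : realType) : Num.real_closed_axiom (Rc R).
Proof.
move=> p a b ab /andP[pa pb].
have := @IVT R (fun x => p.[x]) a b 0 ab.
case.
- move=> x; apply: continuous_subspaceT => y; exact: continuous_horner.
- by rewrite ge_min le_max pa pb orbT.
move=> c; rewrite in_itv /= => cab pc; exists c => //; exact/rootP.
Qed.

HB.instance Definition _ (R : realType) :=
  Num.RealField_isClosed.Build (Rc R) (@realType_rca R).

Section Real.
Variable R : realType.
Local Open Scope complex_scope.
Local Notation C := (Rc R)[i].

Lemma arch_C (x : C) : 0 <= x -> exists N : nat, x < N%:R.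
Proof.
case: x => a b x0; have := ger0_Im x0; rewrite /= => b0; subst b.
have a0 : 0 <= a by rewrite -ler0c.
have := @archi_boundP R a a0; set N := Num.Def.archi_bound _ => HN.
by exists N; rewrite -(rmorph_nat (real_complex (Rc R))) ltcR.
Qed.

Lemma normC_real (x : Rc R) : `|x%:C| = `|x|%:C.
Proof. by rewrite normc_def /= expr0n addr0 sqrtr_sqr. Qed.

Lemma lin_bounded (n : nat) (A : 'M[R]_n) (xi : 'cV[R]_n) :
  (exists B : R, forall N, exists2 k, (N <= k)%N & forall i, `|(A ^+ k *m xi) i 0| <= B) ->
  exists B : R, forall k i, `|(A ^+ k *m xi) i 0| <= B.
Proof.
case: n A xi => [|n] A xi FBr; first by exists 0 => k [].
pose phi := real_complex (Rc R).
pose A' : 'M[C]_n.+1 := map_mx phi A.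
pose xi' : 'cV[C]_n.+1 := map_mx phi xi.
have Hmap k : A' ^+ k *m xi' = map_mx phi (A ^+ k *m xi).
  by rewrite map_mxM /A' -rmorphXn.
have FB' : l7FB A' xi'.
  case: FBr => B HB; exists (B%:C) => N; have [k Nk Hk] := HB N.
  by exists k => // i; rewrite Hmap mxE normC_real lecR; exact: Hk.
have CH := Cayley_Hamilton A'.
have pn0 : char_poly A' != 0 by apply: monic_neq0; exact: char_poly_monic.
have H0 : horner_mx A' (char_poly A') *m xi' = 0 by rewrite CH mul0mx.
have [B HB] := l7_main_C (@arch_C) (leqnn _) pn0 H0 FB'.
exists (complex.Re B) => k i; have := HB k i; rewrite Hmap mxE normC_real lecE.
by case/andP.
Qed.

End Real.

Lemma trmx_cont (K : numFieldType) m n : continuous (fun M : 'M[K]_(m, n) => M^T).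
Proof.
move=> M s /= /nbhs_ballP [e e0 es]; apply/nbhs_ballP; exists e => //= N [_ MN].
by apply: es; split => // i j; rewrite !mxE; exact: MN.
Qed.

Lemma entry_le_norm (R : realType) m n (M : 'M[R]_(m, n)) i j : `|M i j| <= `|M|.
Proof.
rewrite [leRHS]/Num.Def.normr /= mx_normrE.
exact: (le_bigmax _ (fun ij : 'I_m * 'I_n => `|M ij.1 ij.2|) (i, j)).
Qed.

Lemma norm_le_entries (R : realType) m n (M : 'M[R]_(m, n)) (B : R) :
  0 <= B -> (forall i j, `|M i j| <= B) -> `|M| <= B.
Proof.
move=> B0 HB; rewrite [leLHS]/Num.Def.normr /= mx_normrE.
by apply: bigmax_le => // ij _; exact: HB.
Qed.

Lemma part1 (R : realType) (M : pseudoMetricType R) (f : M -> M) (X : set M) (xi : M) :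
  forward_invariant f X -> X xi -> forward_precompact_in X f xi ->
  omega_limit_in X f xi !=set0.
Proof.
move=> inv Xxi cpt.
pose u k := iter k f xi.
have uX k : X (u k).
  elim: k => [|k IH]; first exact: Xxi.
  by apply: inv; exists (u k).
have uK k : closure_in X (forward_orbit f xi) (u k).
  by split; [exact: uX | apply: subset_closure; exists k].
have [x [Kx clx]] : closure_in X (forward_orbit f xi) `&` cluster (u @ \oo) !=set0.
  by apply: cpt; exists 0%N => // m _; exact: uK.
have ex j : exists m, (j <= m)%N /\ ball x (j.+1%:R^-1) (u m).
  have := clx [set y | exists2 m, (j <= m)%N & y = u m] (ball x j.+1%:R^-1).
  case.
  - by exists j => // m /= jm; exists m.
  - by apply: nbhsx_ballx; rewrite invr_gt0.
  by move=> _ [[m jm ->] b]; exists m.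
pose k j := projT1 (cid (ex j)).
have kP j : (j <= k j)%N /\ ball x (j.+1%:R^-1) (u (k j)) := projT2 (cid (ex j)).
exists x; split; first by case: Kx.
exists k; split.
  move=> P [N _ HN]; exists N => // j Nj; apply: HN.
  exact: leq_trans Nj (kP j).1.
apply/cvg_ballP => e e0.
have e10 : 0 <= e^-1 by rewrite invr_ge0 ltW.
have HN := archi_boundP e10; set N := Num.Def.archi_bound _ in HN.
exists N => // j /= Nj; apply: le_ball (kP j).2.
rewrite -div1r ler_pdivrMr //.
apply: le_trans (_ : e * e^-1 <= _); first by rewrite divff ?lt0r_neq0.
rewrite ler_wpM2l ?ltW //.
apply: lt_le_trans HN _; rewrite ler_nat; exact: leqW.
Qed.

Lemma part2 (R : realType) (n : nat) (f : 'cV[R]_n -> 'cV[R]_n) (A : 'M[R]_n)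
    (X : set 'cV[R]_n) (xi : 'cV[R]_n) :
  forward_invariant f X -> X xi ->
  (forall x, X x -> f x = A *m x) -> closed X ->
  omega_limit_in X f xi !=set0 -> forward_precompact_in X f xi.
Proof.
move=> inv Xxi fA Xcl [x [Xx [k [kc uc]]]].
have itA m : X (iter m f xi) /\ iter m f xi = A ^+ m *m xi.
  elim: m => [|m [Xm Em]] /=; first by rewrite expr0 mul1mx.
  split; first by apply: inv; exists (iter m f xi).
  by rewrite fA // Em mulmxA mulmxE -exprS.
have FBr : exists B : R, forall N, exists2 m, (N <= m)%N &
    forall i, `|(A ^+ m *m xi) i 0| <= B.
  exists (`|x| + 1) => N.
  have h1 : \forall j \near \oo, (N <= k j)%N := kc _ (nbhs_infty_ge N).
  have h2 : \forall j \near \oo, `|x - iter (k j) f xi| < 1.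
    by move/cvgrPdist_lt : uc; apply.
  have [j [Nj dj]] := filter_ex (filterI h1 h2).
  exists (k j) => // i; rewrite -(itA (k j)).2.
  apply: le_trans (entry_le_norm _ i 0) _.
  set y := iter (k j) f xi.
  have -> : y = x - (x - y) by rewrite opprB addrC subrK.
  by apply: le_trans (ler_normB _ _) _; rewrite lerD2l ltW.
have [B HB] := lin_bounded FBr.
set B1 := `|B|.
have B10 : 0 <= B1 := normr_ge0 B.
set K := closure_in X (forward_orbit f xi).
have Kcl : closed K by apply: closedI => //; exact: closed_closure.
have ballcl := @closed_closed_ball_ R 'cV[R]_n 0 B1.
have orb_sub : forward_orbit f xi `<=` closed_ball_ Num.Def.normr (0 : 'cV[R]_n) B1.
  move=> _ [m _ <-]; rewrite /closed_ball_ /= sub0r normrN (itA m).2.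
  apply: norm_le_entries => // i j; rewrite (ord1 j).
  by apply: le_trans (HB m i) _; exact: ler_norm.
have Kb v : K v -> `|v| <= B1.
  case=> _ /(closureS orb_sub); rewrite -(proj1 (closure_id _) ballcl) /closed_ball_ /=.
  by rewrite sub0r normrN.
pose K' := [set r : 'rV[R]_n | K r^T].
have K'cl : closed K'.
  have -> : K' = (fun r : 'rV[R]_n => r^T) @^-1` K by [].
  apply: preimage_closed => //= r _; exact: trmx_cont.
have K'b : bounded_set K'.
  exists B1; split; first exact: num_real.
  move=> M BM r Kr; apply: norm_le_entries; first by apply: le_trans (ltW BM).
  move=> i j; apply: (le_trans _ (ltW BM)); apply: le_trans (Kb _ Kr).
  by apply: le_trans (entry_le_norm _ j i); rewrite mxE.
have K'c := bounded_closed_compact K'b K'cl.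
rewrite /forward_precompact_in -/K.
have -> : K = (fun r : 'rV[R]_n => r^T) @` K'.
  apply/seteqP; split => [v Kv|_ [r Kr <-]] //.
  by exists v^T; rewrite /K' /= trmxK.
apply: continuous_compact => //; apply: continuous_subspaceT => r.
exact: trmx_cont.
Qed.
End L7.

Theorem lemma7 (R : realType) :
  (forall (M : pseudoMetricType R) (f : M -> M) (X : set M) (xi : M),
      hausdorff_space M -> separable_space M ->
      continuous f -> forward_invariant f X -> X xi ->
      forward_precompact_in X f xi -> omega_limit_in X f xi !=set0)
  /\
  (forall (n : nat) (f : 'cV[R]_n -> 'cV[R]_n) (A : 'M[R]_n)
          (X : set 'cV[R]_n) (xi : 'cV[R]_n),
      continuous f -> forward_invariant f X -> X xi ->
      (forall x, X x -> f x = A *m x) -> closed X ->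
      omega_limit_in X f xi !=set0 -> forward_precompact_in X f xi).
Proof.
split.
- by move=> M f X xi _ _ _; exact: L7.part1.
- by move=> n f A X xi _; exact: L7.part2.
Qed.
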